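(* Let $p$ be a prime, $A$ a torsion-free $\mathbb{Z}_{(p)}$-algebra, $\mathfrak a\subseteq A$ a divided-power ideal, and $P,Q\in A[X]$ monic polynomials. The following are equivalent: (1) $e_n(P)\equiv e_n(Q)\pmod{\mathfrak a}$ for every $n\ge1$; (2) $e_n(P)\equiv e_n(Q)\pmod{\mathfrak a}$ for every $n$ with $1\le n\le\max\{\deg P,\deg Q\}$; (3) $p_n(P)\equiv p_n(Q)\pmod{n\mathfrak a}$ for every $n\ge 1$; (4) $p_n(P)\equiv p_n(Q)\pmod{n\mathfrak a}$ for every $n$ with $1\le n\le\max\{\deg P,\deg Q\}$.
   Context: $\mathbb{Z}_{(p)}\subseteq\mathbb{Q}$ is the ring of rationals $a/b$ with $p\nmid b$. An ideal $\mathfrak a$ of a torsion-free $\mathbb{Z}_{(p)}$-algebra $A$ is a divided-power ideal if $a^p\in p\,\mathfrak a$ for all $a\in\mathfrak a$ (equivalently $a^k/k!\in\mathfrak a$ in $A\otimes\mathbb{Q}$ for all $a\in\mathfrak a$, $k\ge1$). For a monic $P=X^d+a_1X^{d-1}+\dots+a_d\in A[X]$: $e_0(P)=1$, $e_n(P)=(-1)^na_n$ for $1\le n\le d$, $e_n(P)=0$ for $n>d$; and $p_n(P)$ for $n\ge1$ is defined recursively by Newton's identities $p_n(P)=\sum_{i=1}^{n-1}(-1)^{i-1}e_i(P)p_{n-i}(P)+(-1)^{n-1}n\,e_n(P)$ (when $A$ is a domain, $p_n(P)=\sum_i\alpha_i^n$ over the roots $\alpha_i$ of $P$ with multiplicity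 in an extension). $n\mathfrak a$ denotes the ideal $\{na: a\in\mathfrak a\}$. *)

(* Defs.v *)
From mathcomp Require Import all_boot all_order all_algebra.
Set Implicit Arguments. Unset Strict Implicit. Unset Printing Implicit Defensive.
Import Order.TTheory GRing.Theory Num.Theory.
Local Open Scope ring_scope.

Definition is_ideal (A : comNzRingType) (I : A -> Prop) : Prop :=
  [/\ I 0, (forall x y, I x -> I y -> I (x + y)) & (forall a x, I x -> I (a * x))].

Definition Zp_loc_algebra (p : nat) (A : comNzRingType) : Prop :=
  forall n : nat, coprime n p -> exists b : A, n%:R * b = 1.

Definition torsion_free (A : comNzRingType) : Prop :=
  forall (n : nat) (a : A), (0 < n)%N -> n%:R * a = 0 -> a = 0.

Definition in_mul_ideal (A : comNzRingType) (n : nat) (I : A -> Prop) (x : A) : Prop :=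
  exists a, I a /\ x = n%:R * a.

Definition dp_ideal (p : nat) (A : comNzRingType) (I : A -> Prop) : Prop :=
  is_ideal I /\ forall a, I a -> in_mul_ideal p I (a ^+ p).

(* e_n(P) for monic P = X^d + a_1 X^(d-1) + ... + a_d :
   e_n = (-1)^n a_n = (-1)^n P`_(d-n) for n <= d, 0 for n > d (e_0 = 1). *)
Definition esym_poly (A : comNzRingType) (P : {poly A}) (n : nat) : A :=
  if (n <= (size P).-1)%N then (-1) ^+ n * P`_((size P).-1 - n) else 0.

(* power sums via Newton's identities, with fuel k *)
Fixpoint psum_fuel (A : comNzRingType) (P : {poly A}) (k n : nat) : A :=
  match k with
  | 0 => 0
  | k'.+1 =>
      \sum_(1 <= i < n) (-1) ^+ i.-1 * esym_poly P i * psum_fuel P k' (n - i)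
      + (-1) ^+ n.-1 * n%:R * esym_poly P n
  end.

Definition psum_poly (A : comNzRingType) (P : {poly A}) (n : nat) : A :=
  psum_fuel P n n.

(* Main.v *)
Require Import Defs.
From mathcomp Require Import all_boot all_order all_algebra.
From mathcomp Require Import zify ring.
Import Order.TTheory GRing.Theory Num.Theory.
Local Open Scope ring_scope.


Section Gen.
Variable R : comNzRingType.
Variable J : R -> Prop.
Hypothesis HJ : is_ideal J.

Lemma idD x y : J x -> J y -> J (x + y).
Proof. by have [_ h _] := HJ; apply: h. Qed.
Lemma idM a x : J x -> J (a * x).
Proof. by have [_ _ h] := HJ; apply: h. Qed.
Lemma idMr a x : J x -> J (x * a).
Proof. by rewrite mulrC; apply: idM. Qed.
Lemma id0 : J 0.
Proof. by have [h _ _] := HJ. Qed.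
Lemma idN x : J x -> J (- x).
Proof. by move=> h; rewrite -mulN1r; apply: idM. Qed.
Lemma idB x y : J x -> J y -> J (x - y).
Proof. by move=> hx hy; apply: idD => //; apply: idN. Qed.
Lemma idX x k : J x -> (0 < k)%N -> J (x ^+ k).
Proof. by move=> hx; case: k => // k _; rewrite exprSr; apply: idM. Qed.
Lemma idsum (I0 : Type) (r : seq I0) (P : pred I0) (F : I0 -> R) :
  (forall i, P i -> J (F i)) -> J (\sum_(i <- r | P i) F i).
Proof. move=> h; apply: (big_ind J); [exact: id0 | exact: idD | exact: h]. Qed.
Lemma idMn x k : J x -> J (x *+ k).
Proof. by move=> h; rewrite -mulr_natl; apply: idM. Qed.

Lemma mi0 n : in_mul_ideal n J 0.
Proof. by exists 0; rewrite mulr0; split => //; exact: id0. Qed.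
Lemma miD n x y : in_mul_ideal n J x -> in_mul_ideal n J y -> in_mul_ideal n J (x + y).
Proof. by move=> [a [ha ->]] [b [hb ->]]; exists (a + b); rewrite mulrDr; split => //; apply: idD. Qed.
Lemma miM n c x : in_mul_ideal n J x -> in_mul_ideal n J (c * x).
Proof. by move=> [a [ha ->]]; exists (c * a); rewrite mulrCA; split => //; apply: idM. Qed.
Lemma miN n x : in_mul_ideal n J x -> in_mul_ideal n J (- x).
Proof. by move=> h; rewrite -mulN1r; apply: miM. Qed.
Lemma misum n (I0 : Type) (r : seq I0) (P : pred I0) (F : I0 -> R) :
  (forall i, P i -> in_mul_ideal n J (F i)) -> in_mul_ideal n J (\sum_(i <- r | P i) F i).
Proof. move=> h; apply: (big_ind (in_mul_ideal n J)); [exact: mi0 | exact: miD | exact: h]. Qed.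

Variable p : nat.
Hypothesis pr : prime p.

Lemma dp_add y z : J y -> J z -> in_mul_ideal p J (y ^+ p) -> in_mul_ideal p J (z ^+ p) ->
  in_mul_ideal p J ((y + z) ^+ p).
Proof.
move=> hy hz hyp hzp.
have p0 : (0 < p)%N by apply: prime_gt0.
move: pr hyp hzp; rewrite -(prednK p0) => pr' hyp hzp.
rewrite exprDn big_ord_recr /= big_ord_recl /= subn0 subnn.
rewrite !expr0 mulr1 mul1r bin0 binn !mulr1n.
apply: miD; last by [].
apply: miD => //.
apply: misum => -[i hi] _ /=.
have hi1 : (0 < i.+1 < p.-1.+1)%N by rewrite /= ltnS.
have /dvdnP [k hk] := prime_dvd_bin pr' hi1.
rewrite /bump /= add1n hk -mulr_natr natrM mulrA.
exists (y ^+ (p.-1.+1 - i.+1) * z ^+ i.+1 * k%:R).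
split; last by rewrite mulrC.
apply: idMr; apply: idM; apply: idX => //.
Qed.

Hypothesis Zp : Zp_loc_algebra p R.
Hypothesis dp : forall a, J a -> in_mul_ideal p J (a ^+ p).

Lemma dp_ppow a v : J a -> exists b, J b /\ a ^+ (p ^ v) = (p%:R) ^+ v * b.
Proof.
move=> ha; elim: v => [|v [b [hb e]]]; first by exists a; rewrite expn0 expr1 expr0 mul1r.
have [c [hc ec]] := dp _ hb.
exists ((p%:R) ^+ (v * p.-1) * c); split; first by apply: idM.
rewrite expnSr exprM e exprMn ec -exprM [LHS]mulrA -exprSr [RHS]mulrA -exprD; congr (_ ^+ _ * _).
have p0 : (0 < p)%N by apply: prime_gt0.
have := prednK p0; lia.
Qed.

Lemma dp_pow a m : J a -> (0 < m)%N -> in_mul_ideal m J (a ^+ m).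
Proof.
move=> ha m0; have [u cu em] := pfactor_coprime pr m0.
set v := logn p m in em.
have u0 : (0 < u)%N by move: m0; rewrite em muln_gt0 => /andP[].
have [w hw] : exists w : R, u%:R * w = 1 by apply: Zp; rewrite coprime_sym.
have [b [hb eb]] := dp_ppow a v ha.
exists (w * (p%:R ^+ (v * u.-1) * b ^+ u)); split.
  by apply: idM; apply: idM; apply: idX.
rewrite {1}em mulnC exprM eb exprMn -exprM em natrM natrX.
have -> : (v * u = v + v * u.-1)%N by have := prednK u0; lia.
rewrite exprD -[LHS]mul1r -{1}hw; ring.
Qed.
End Gen.

Set Implicit Arguments. Unset Strict Implicit.

Section Poly.
Variable A : comNzRingType.
Variable I : A -> Prop.
Variable p : nat.
Hypothesis pr : prime p.
Hypothesis Zp : Zp_loc_algebra p A.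
Hypothesis dpI : dp_ideal p I.

Definition PJ (x : {poly A}) : Prop := forall i, I x`_i.

Lemma HI : is_ideal I. Proof. by case: dpI. Qed.

Lemma PJ_ideal : is_ideal PJ.
Proof.
split.
- by move=> i; rewrite coef0; apply: id0; apply: HI.
- by move=> x y hx hy i; rewrite coefD; apply: idD; [apply: HI|apply: hx|apply: hy].
- move=> a x hx i; rewrite coefM; apply: idsum; first exact: HI.
  by move=> j _; apply: idM; [apply: HI| apply: hx].
Qed.

Lemma PJ_Zp : Zp_loc_algebra p {poly A}.
Proof.
move=> n cn; have [b hb] := Zp cn; exists b%:P.
by rewrite -polyC_natr -polyCM hb.
Qed.

Lemma PJC c : I c -> PJ c%:P.
Proof. by move=> h i; rewrite coefC; case: eqP => // _; apply: id0; apply: HI. Qed.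

Lemma PJ_dp x : PJ x -> in_mul_ideal p PJ (x ^+ p).
Proof.
have p0 : (0 < p)%N by apply: prime_gt0.
elim/poly_ind: x => [_|q c IH hx].
  by rewrite expr0n gtn_eqF //; apply: mi0; apply: PJ_ideal.
have hq : PJ q.
  by move=> i; have := hx i.+1; rewrite coefD coefMX coefC /= addr0.
have hc : I c.
  by have := hx 0%N; rewrite coefD coefMX coefC /= add0r.
apply: (@dp_add _ PJ PJ_ideal p pr).
- by apply: (@idMr _ PJ PJ_ideal).
- by apply: PJC.
- have [b [hb eb]] := IH hq.
  exists (b * 'X^p); split.
    by apply: (@idMr _ PJ PJ_ideal).
  by rewrite exprMn eb mulrA.
- have [d [hd ed]] := (proj2 dpI) c hc.
  exists d%:P; split; first by apply: PJC.
  by rewrite -polyC_exp ed polyCM polyC_natr.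
Qed.

Lemma PJ_pow x m : PJ x -> (0 < m)%N -> in_mul_ideal m PJ (x ^+ m).
Proof.
move=> hx m0; apply: (@dp_pow _ PJ PJ_ideal p pr PJ_Zp PJ_dp) => //.
Qed.
End Poly.


Section NS.
Variable A : comNzRingType.

Fixpoint nsf (c : nat -> A) (k n : nat) : A :=
  match k with
  | 0 => 0
  | k'.+1 => - (\sum_(1 <= i < n) c i * nsf c k' (n - i)) - n%:R * c n
  end.
Definition ns c n := nsf c n n.

Lemma nsf0 c k : nsf c k 0 = 0.
Proof. by case: k => //= k; rewrite big_geq // oppr0 mul0r subr0. Qed.

Lemma nsf_fuel c k1 : forall k2 m, (m <= k1)%N -> (m <= k2)%N -> nsf c k1 m = nsf c k2 m.
Proof.
elim: k1 => [|k1 IH] k2 m h1 h2.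
  by move: h1; rewrite leqn0 => /eqP ->; rewrite !nsf0.
case: m h1 h2 => [|m] h1 h2; first by rewrite !nsf0.
case: k2 h2 => // k2 h2 /=.
congr (- _ - _); apply: eq_big_nat => i /andP [hi1 hi2].
by congr (_ * _); apply: IH; lia.
Qed.

Lemma ns_rec c n : ns c n = - (\sum_(1 <= i < n) c i * ns c (n - i)) - n%:R * c n.
Proof.
case: n => [|n]; first by rewrite /ns /= big_geq // oppr0 mul0r subr0.
rewrite /ns /=; congr (- _ - _); apply: eq_big_nat => i /andP [hi1 hi2].
by congr (_ * _); apply: nsf_fuel; lia.
Qed.

Lemma ns0 c : ns c 0 = 0. Proof. by []. Qed.

Lemma ns_agree c c' n : (forall i, (i < n)%N -> c i = c' i) ->
  forall k, (k < n)%N -> ns c k = ns c' k.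
Proof.
move=> h k; elim: k {-2}k (leqnn k) => [|K IH] k hk hkn.
  by move: hk; rewrite leqn0 => /eqP ->.
rewrite !ns_rec (h k hkn); congr (- _ - _); apply: eq_big_nat => i /andP [hi1 hi2].
rewrite h; last by lia.
by rewrite IH //; lia.
Qed.

Lemma ns_step c c' n : (forall i, (i < n)%N -> c i = c' i) ->
  ns c n - ns c' n = - (n%:R * (c n - c' n)).
Proof.
move=> h; rewrite !ns_rec.
have -> : \sum_(1 <= i < n) c i * ns c (n - i) = \sum_(1 <= i < n) c' i * ns c' (n - i).
  apply: eq_big_nat => i /andP [hi1 hi2]; rewrite h //.
  by rewrite (@ns_agree c c' n h (n - i)) //; lia.
ring.
Qed.

Definition cP (P : {poly A}) i := (-1) ^+ i * esym_poly P i.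

Lemma psum_ns_gen P k n : psum_fuel P k n = nsf (cP P) k n.
Proof.
elim: k n => [|k IH] n //=.
congr (_ + _).
  rewrite -sumrN; apply: eq_big_nat => i /andP [hi1 hi2]; rewrite IH /cP.
  by case: i hi1 hi2 => // i _ _ /=; rewrite exprS; ring.
rewrite /cP; case: n => [|n] /=; [ring | rewrite exprS; ring].
Qed.

Lemma psum_ns P n : psum_poly P n = ns (cP P) n.
Proof. exact: psum_ns_gen. Qed.
End NS.


Section Cong.
Variable A : comNzRingType.
Variable N : nat.

Definition cg (a b : {poly A}) := exists r, a - b = r * 'X^(N.+1).

Lemma cg_refl a : cg a a. Proof. by exists 0; rewrite subrr mul0r. Qed.
Lemma cg_eq a b : a = b -> cg a b. Proof. by move=> ->; apply: cg_refl. Qed.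
Lemma cg_sym a b : cg a b -> cg b a.
Proof. by move=> [r e]; exists (- r); rewrite mulNr -e opprB. Qed.
Lemma cg_trans a b c : cg a b -> cg b c -> cg a c.
Proof. by move=> [r e] [s f]; exists (r + s); rewrite mulrDl -e -f; ring. Qed.
Lemma cgD a b c d : cg a b -> cg c d -> cg (a + c) (b + d).
Proof. by move=> [r e] [s f]; exists (r + s); rewrite mulrDl -e -f; ring. Qed.
Lemma cgN a b : cg a b -> cg (- a) (- b).
Proof. by move=> [r e]; exists (- r); rewrite mulNr -e; ring. Qed.
Lemma cgMl c a b : cg a b -> cg (c * a) (c * b).
Proof. by move=> [r e]; exists (c * r); rewrite -mulrA -e; ring. Qed.
Lemma cgMr c a b : cg a b -> cg (a * c) (b * c).
Proof. by move=> [r e]; exists (c * r); rewrite -mulrA -e; ring. Qed.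

Lemma cg_coef a b : cg a b -> forall i, (i <= N)%N -> a`_i = b`_i.
Proof.
move=> [r e] i hi; apply/eqP; rewrite -subr_eq0 -coefB e coefMXn.
by rewrite ltnS hi.
Qed.

Lemma coef_cg (a b : {poly A}) : (forall i, (i <= N)%N -> a`_i = b`_i) -> cg a b.
Proof.
move=> h; exists (drop_poly N.+1 (a - b)).
rewrite -{1}(poly_take_drop N.+1 (a - b)).
suff -> : take_poly N.+1 (a - b) = 0 by rewrite add0r.
apply/polyP => i; rewrite coef_take_poly coef0 coefB.
by case: ltnP => // hi; rewrite h ?subrr.
Qed.

Lemma Xfact (q : {poly A}) : q`_0 = 0 -> exists r, q = r * 'X.
Proof.
move=> h; exists (drop_poly 1 q).
rewrite -{1}(poly_take_drop 1 q) expr1.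
suff -> : take_poly 1 q = 0 by rewrite add0r.
by apply/polyP => i; rewrite coef_take_poly coef0; case: i => //.
Qed.

Lemma cg_pow0 (q : {poly A}) : q`_0 = 0 -> cg (q ^+ N.+1) 0.
Proof. by move=> /Xfact [r ->]; exists (r ^+ N.+1); rewrite subr0 exprMn. Qed.

Lemma cg_deriv a b : cg a b -> cg ('X * a^`()) ('X * b^`()).
Proof.
move=> [r e]; exists ('X * r^`() + r *+ N.+1).
rewrite -mulrBr -derivB e derivM derivXn /=.
rewrite mulrDr mulrDl; congr (_ + _); first by ring.
by rewrite !mulrnAr mulrnAl exprS; congr (_ *+ _); rewrite mulrCA.
Qed.
End Cong.


Section Newt.
Variable A : comNzRingType.

Definition Tp N (c : nat -> A) : {poly A} := \poly_(i < N.+1) c i.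
Definition Pw N (c : nat -> A) : {poly A} := \poly_(i < N.+1) ns c i.

Lemma newton_poly N c : c 0%N = 1 -> cg N (Tp N c * Pw N c) (- ('X * (Tp N c)^`())).
Proof.
move=> c0; apply: coef_cg => i hi.
rewrite coefM coefN coefXM coef_deriv.
case: i hi => [|i] hi /=.
  by rewrite big_ord_recl big_ord0 /= !coef_poly /= /ns /= mulr0 addr0 oppr0.
rewrite big_ord_recl /= !coef_poly /= subn0 ltnS hi c0 mul1r.
rewrite big_ord_recr /= subnn /bump /= !add1n.
rewrite [(Pw N c)`_0]coef_poly /= ns0 mulr0 addr0.
rewrite (ns_rec c i.+1).
have -> : \sum_(j < i) (Tp N c)`_(1 + j) * (Pw N c)`_(i.+1 - (1 + j)) =
          \sum_(1 <= j < i.+1) c j * ns c (i.+1 - j).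
  rewrite big_add1 /= big_mkord; apply: eq_bigr => -[j hj] _ /=.
  rewrite !coef_poly ifT; last by lia.
  by rewrite ifT //; lia.
rewrite -mulr_natl; ring.
Qed.
End Newt.


Section Core.
Variable A : comNzRingType.
Variable I : A -> Prop.
Variable p : nat.
Hypothesis pr : prime p.
Hypothesis Zp : Zp_loc_algebra p A.
Hypothesis tf : torsion_free A.
Hypothesis dpI : dp_ideal p I.

Let HI := HI dpI.
Let PJI := PJ_ideal dpI.

Lemma tf_cancel m (a b : A) : (0 < m)%N -> a *+ m = b *+ m -> a = b.
Proof.
move=> m0 e; apply/eqP; rewrite -subr_eq0; apply/eqP; apply: (tf m0).
by rewrite mulr_natl mulrnBl e subrr.
Qed.

Lemma term_in N x k : (0 < N)%N -> PJ I x ->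
  in_mul_ideal N I (('X * x^`() * (- x) ^+ k)`_N).
Proof.
move=> N0 hx.
have hnx : PJ I (- x) by apply: (@idN _ _ PJI).
have [y [hy ey]] := @PJ_pow _ _ _ pr Zp dpI (- x) k.+1 hnx (ltn0Sn k).
have key : ('X * ((- x) ^+ k.+1)^`()) = - ('X * x^`() * (- x) ^+ k) *+ k.+1.
  by rewrite deriv_exp derivN /= mulrnAr mulNr mulrN mulrA.
have := congr1 (fun q : {poly A} => q`_N) key.
rewrite ey mulr_natl derivMn coefXM coefMn coefMn coefN (negbTE (lt0n_neq0 N0)).
rewrite coef_deriv (prednK N0) => e.
exists (- y`_N); split; first by apply: (@idN _ _ HI).
rewrite mulrN mulr_natl; apply: (tf_cancel (ltn0Sn k)).
by rewrite mulNrn e mulNrn opprK.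
Qed.

Lemma geom (z : {poly A}) n : (1 - z) * \sum_(k < n) z ^+ k = 1 - z ^+ n.
Proof. by rewrite -[1 - z]opprB mulNr -subrX1 opprB. Qed.

Lemma core N (c c' : nat -> A) : (0 < N)%N -> c 0%N = 1 -> c' 0%N = 1 ->
  (forall i, I (c i - c' i)) -> in_mul_ideal N I (ns c N - ns c' N).
Proof.
move=> N0 c0 c'0 hcc.
set E := Tp N c; set F := Tp N c'.
set D := Pw N c - Pw N c'.
have hD : PJ I (E - F).
  move=> i; rewrite coefB !coef_poly; case: ifP => _ //.
  by rewrite subrr; apply: (@id0 _ _ HI).
have D0 : (E - F)`_0 = 0 by rewrite coefB !coef_poly /= c0 c'0 subrr.
have F0 : F`_0 = 1 by rewrite coef_poly.
set G := \sum_(k < N.+1) (1 - F) ^+ k.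
have FG : cg N (F * G) 1.
  have -> : F * G = (1 - (1 - F)) * G by congr (_ * _); ring.
  rewrite geom.
  have := @cg_pow0 A N (1 - F); rewrite coefB coef1 F0 subrr => /(_ erefl) h.
  by move: h => [r e]; exists (- r); rewrite mulNr -e; ring.
set x := (E - F) * G.
have hx : PJ I x by apply: (@idMr _ _ PJI).
have x0 : x`_0 = 0 by rewrite coef0M D0 mul0r.
set U := 1 + x.
have hUF : cg N E (U * F).
  apply: (@cg_trans _ _ _ (F + (E - F) * (F * G))).
    by have := cgMl (E - F) FG; move=> [r e]; exists (- r); rewrite mulNr -e; ring.
  by apply: cg_eq; rewrite /U /x; ring.
have NE := newton_poly N c0; have NF := newton_poly N c'0.
rewrite -/E in NE; rewrite -/F in NF.
have s1 : cg N (U * F * D) (- ('X * U^`() * F)).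
  apply: (@cg_trans _ _ _ (U * F * Pw N c - U * (F * Pw N c'))).
    by apply: cg_eq; rewrite /D; ring.
  apply: (@cg_trans _ _ _ (- ('X * (U * F)^`()) - U * (- ('X * F^`())))); last first.
    by apply: cg_eq; rewrite derivM; ring.
  apply: cgD; last by apply: cgN; apply: cgMl.
  apply: (@cg_trans _ _ _ (E * Pw N c)); first by apply: cgMr; apply: cg_sym.
  apply: (cg_trans NE); apply: cgN; exact: cg_deriv.
have s2 : cg N (U * D) (- ('X * U^`())).
  apply: (@cg_trans _ _ _ (U * F * D * G)).
    apply: (@cg_trans _ _ _ (U * D * 1)); first by apply: cg_eq; ring.
    apply: cg_sym; apply: (@cg_trans _ _ _ (U * D * (F * G))).
      by apply: cg_eq; ring.
    by apply: cgMl.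
  apply: (@cg_trans _ _ _ (- ('X * U^`() * F) * G)); first by apply: cgMr.
  apply: (@cg_trans _ _ _ (- ('X * U^`()) * (F * G))); first by apply: cg_eq; ring.
  apply: (@cg_trans _ _ _ (- ('X * U^`()) * 1)); first by apply: cgMl.
  by apply: cg_eq; ring.
set S := \sum_(k < N.+1) (- x) ^+ k.
have SU : cg N (S * U) 1.
  have -> : S * U = (1 - (- x)) * S by rewrite /U; ring.
  rewrite geom.
  have := @cg_pow0 A N (- x); rewrite coefN x0 oppr0 => /(_ erefl) [r e].
  by exists (- r); rewrite mulNr -e; ring.
have s3 : cg N D (- ('X * x^`() * S)).
  apply: (@cg_trans _ _ _ (S * U * D)).
    apply: (@cg_trans _ _ _ (1 * D)); first by apply: cg_eq; ring.
    by apply: cg_sym; apply: cgMr.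
  apply: (@cg_trans _ _ _ (S * (U * D))); first by apply: cg_eq; ring.
  apply: (@cg_trans _ _ _ (S * (- ('X * U^`())))); first by apply: cgMl.
  by apply: cg_eq; rewrite /U derivD derivC add0r; ring.
have := cg_coef s3 (leqnn N).
rewrite /D coefB !coef_poly ltnSn => ->.
rewrite coefN mulr_sumr coef_sum; apply: (@miN _ _ HI); apply: (@misum _ _ HI) => k _.
exact: term_in.
Qed.
End Core.

Unset Implicit Arguments. Set Strict Implicit.

Lemma esym_big (A : comNzRingType) (P : {poly A}) n :
  ((size P).-1 < n)%N -> esym_poly P n = 0.
Proof. by move=> h; rewrite /esym_poly leqNgt h. Qed.

Lemma esym_cP (A : comNzRingType) (P : {poly A}) n :
  esym_poly P n = (-1) ^+ n * cP P n.
Proof. by rewrite /cP mulrA -exprMn mulrNN mulr1 expr1n mul1r. Qed.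

Lemma cP0 (A : comNzRingType) (P : {poly A}) : P \is monic -> cP P 0 = 1.
Proof. by move=> /monicP h; rewrite /cP /esym_poly leq0n subn0 mul1r expr0 mul1r. Qed.

Theorem theorem2p7 (p : nat) (A : comNzRingType) (I : A -> Prop) (P Q : {poly A}) :
  prime p -> Zp_loc_algebra p A -> torsion_free A -> dp_ideal p I ->
  P \is monic -> Q \is monic ->
  [<-> (forall n : nat, (1 <= n)%N -> I (esym_poly P n - esym_poly Q n));
       (forall n : nat, (1 <= n <= maxn (size P).-1 (size Q).-1)%N ->
           I (esym_poly P n - esym_poly Q n));
       (forall n : nat, (1 <= n)%N ->
           in_mul_ideal n I (psum_poly P n - psum_poly Q n));
       (forall n : nat, (1 <= n <= maxn (size P).-1 (size Q).-1)%N ->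
           in_mul_ideal n I (psum_poly P n - psum_poly Q n))].
Proof.
move=> pr Zp tf dpI mP mQ.
have HI := HI dpI.
set M := maxn (size P).-1 (size Q).-1.
have eqI : forall n, I (esym_poly P n - esym_poly Q n) <-> I (cP P n - cP Q n).
  move=> n; rewrite !esym_cP -mulrBr; split => h.
    have -> : cP P n - cP Q n = (-1) ^+ n * ((-1) ^+ n * (cP P n - cP Q n)).
      by rewrite mulrA -exprMn mulrNN mulr1 expr1n mul1r.
    by apply: (@idM _ _ HI).
  by apply: (@idM _ _ HI).
have big : forall n, (M < n)%N -> esym_poly P n - esym_poly Q n = 0.
  move=> n hn; rewrite !esym_big ?subrr //.
    by apply: leq_ltn_trans hn; apply: leq_maxr.
  by apply: leq_ltn_trans hn; apply: leq_maxl.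
have allc : (forall n, (1 <= n <= M)%N -> I (esym_poly P n - esym_poly Q n)) ->
    forall i, I (cP P i - cP Q i).
  move=> h i; case: i => [|i]; first by rewrite !cP0 // subrr; apply: (@id0 _ _ HI).
  apply/eqI; case: (leqP i.+1 M) => hi; first by apply: h; rewrite hi.
  by rewrite big //; apply: (@id0 _ _ HI).
tfae.
- by move=> h n /andP [hn _]; apply: h.
- move=> h n hn; rewrite !psum_ns.
  apply: (core pr Zp tf dpI) => //; [exact: cP0 | exact: cP0 | exact: allc].
- by move=> h n /andP [hn _]; apply: h.
- move=> h.
  suff : forall n, (1 <= n <= M)%N -> I (esym_poly P n - esym_poly Q n).
    move=> h2 n hn; case: (leqP n M) => hnM; first by apply: h2; rewrite hn.
    by rewrite big //; apply: (@id0 _ _ HI).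
  move=> n; elim: n {-2}n (leqnn n) => [|K IH] n hnK /andP [hn1 hnM].
    by move: hnK hn1; rewrite leqn0 => /eqP ->.
  apply/eqI.
  have hlt : forall i, (i < n)%N -> I (cP P i - cP Q i).
    move=> i hi; case: i hi => [|i] hi; first by rewrite !cP0 // subrr; apply: (@id0 _ _ HI).
    apply/eqI; apply: IH; [lia | apply/andP; split; lia].
  pose c' := fun i => if (i < n)%N then cP P i else cP Q i.
  have k1 : in_mul_ideal n I (ns c' n - ns (cP Q) n).
    apply: (core pr Zp tf dpI) => //.
    + by rewrite /c' hn1 cP0.
    + exact: cP0.
    + move=> i; rewrite /c'; case: ifP => hi; first by apply: hlt.
      by rewrite subrr; apply: (@id0 _ _ HI).
  have k2 := ns_step (c := cP P) (c' := c') (n := n).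
  rewrite /c' ltnn in k2.
  have k3 := h n (introT andP (conj hn1 hnM)); rewrite !psum_ns in k3.
  have e : (cP P n - cP Q n) *+ n = - ((ns (cP P) n - ns (cP Q) n) - (ns c' n - ns (cP Q) n)).
    rewrite -mulr_natl -[LHS]opprK -k2; first by ring.
    by move=> i hi; rewrite /c' hi.
  have [a [ha ea]] : in_mul_ideal n I ((cP P n - cP Q n) *+ n).
    by rewrite e; apply: (@miN _ _ HI); apply: (@miD _ _ HI) => //; apply: (@miN _ _ HI).
  have -> : cP P n - cP Q n = a; last by [].
  by apply: (tf_cancel tf hn1); rewrite ea mulr_natl.
Qed.
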